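(* Let $\mathcal{A}=\{A_i\}_{i\in\Lambda}$ be a finite family of $GL_{d+1}(\mathbb{R})$ matrices, and let $\Phi_{\mathcal{A}}=\{\varphi_{A_i}\}_{i\in\Lambda}$ be the induced IFS on the unit sphere $\mathbb{S}^d$. If $\Phi_{\mathcal{A}}$ satisfies the strong exponential separation condition on a nonempty set, then $\mathcal{A}$ is strongly Diophantine.
   Context: $\varphi_A(x)=A\cdot x=Ax/\|Ax\|$ for unit vectors $x\in\mathbb{S}^d$; $\mathbb S^d$ carries the Euclidean metric. For $\mathbf{i}=i_1\ldots i_n$, $A_{\mathbf i}=A_{i_1}\cdots A_{i_n}$ and $\varphi_{\mathbf i}=\varphi_{A_{i_1}}\circ\cdots\circ\varphi_{A_{i_n}}$. $\Phi_{\mathcal{A}}$ satisfies the strong exponential separation condition on $J\subset\mathbb S^d$ if $\varphi_{\mathbf i}\equiv\varphi_{\mathbf j}$ only when $\mathbf i=\mathbf j$, and there is $c>0$ such that for all $n$ and all $\mathbf{i},\mathbf{j}\in\Lambda^n$ with $i_1\ne j_1$ and $\varphi_{\mathbf i}\not\equiv\varphi_{\mathbf j}$, $\sup_{x\in J}\|\varphi_{\mathbf i}(x)-\varphi_{\mathbf j}(x)\|>c^n$. $\mathcal{A}$ is strongly Diophantine if there is $c>0$ such that $\|A_{\mathbf i}-A_{\mathbf j}\|>c^n$ (operator norm) for all $n$ and all $\mathbf i\ne\mathbf j\in\Lambda^n$. *)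

(* Defs.v *)
From HB Require Import structures.
From mathcomp Require Import all_boot all_order all_algebra.
From mathcomp Require Import all_classical all_reals.
Set Implicit Arguments. Unset Strict Implicit. Unset Printing Implicit Defensive.
Import Order.TTheory GRing.Theory Num.Theory.
Local Open Scope ring_scope.
Local Open Scope classical_set_scope.

Definition vnorm (R : realType) (d : nat) (x : 'cV[R]_d.+1) : R :=
  Num.sqrt (\sum_(k < d.+1) (x k ord0) ^+ 2).

Definition sphere (R : realType) (d : nat) : set 'cV[R]_d.+1 :=
  [set x | vnorm x = 1].

Definition opnorm (R : realType) (d : nat) (M : 'M[R]_d.+1) : R :=
  sup [set vnorm (M *m x) | x in @sphere R d].

Definition phiA (R : realType) (d : nat) (M : 'M[R]_d.+1) (x : 'cV[R]_d.+1)
  : 'cV[R]_d.+1 := (vnorm (M *m x))^-1 *: (M *m x).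

Definition Aword (R : realType) (d : nat) (L : finType) (A : L -> 'M[R]_d.+1)
  (w : seq L) : 'M[R]_d.+1 := \prod_(i <- w) A i.

Definition phiword (R : realType) (d : nat) (L : finType) (A : L -> 'M[R]_d.+1)
  (w : seq L) : 'cV[R]_d.+1 -> 'cV[R]_d.+1 :=
  foldr (fun i f => phiA (A i) \o f) id w.

Definition same_on_sphere (R : realType) (d : nat)
  (f g : 'cV[R]_d.+1 -> 'cV[R]_d.+1) : Prop :=
  forall x, @sphere R d x -> f x = g x.

Definition first_differ (L : finType) (i j : seq L) : Prop :=
  match i, j with a :: _, b :: _ => a <> b | _, _ => False end.

Definition strong_exp_sep (R : realType) (d : nat) (L : finType)
  (A : L -> 'M[R]_d.+1) (J : set 'cV[R]_d.+1) : Prop :=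
  (forall i j : seq L,
      same_on_sphere (phiword A i) (phiword A j) -> i = j) /\
  exists c : R, 0 < c /\
    forall (n : nat) (i j : seq L), size i = n -> size j = n ->
      first_differ i j -> ~ same_on_sphere (phiword A i) (phiword A j) ->
      sup [set vnorm (phiword A i x - phiword A j x) | x in J] > c ^+ n.

Definition strongly_diophantine (R : realType) (d : nat) (L : finType)
  (A : L -> 'M[R]_d.+1) : Prop :=
  exists c : R, 0 < c /\
    forall (n : nat) (i j : seq L), size i = n -> size j = n -> i <> j ->
      opnorm (Aword A i - Aword A j) > c ^+ n.

(* Main.v *)
Require Import Defs.
From HB Require Import structures.
From mathcomp Require Import all_boot all_order all_algebra.
From mathcomp Require Import all_classical all_reals.
From mathcomp Require Import ring lra.
Import Order.TTheory GRing.Theory Num.Theory.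
Local Open Scope ring_scope.
Local Open Scope classical_set_scope.

Section V.
Variables (R : realType) (d : nat).
Implicit Types x y u v : 'cV[R]_d.+1.

Definition ssq x := \sum_(k < d.+1) (x k ord0) ^+ 2.
Definition dot u v := \sum_(k < d.+1) u k ord0 * v k ord0.

Lemma ssq_ge0 x : 0 <= ssq x.
Proof. by apply: sumr_ge0 => k _; rewrite sqr_ge0. Qed.

Lemma vnorm_ge0 x : 0 <= vnorm x.
Proof. exact: sqrtr_ge0. Qed.

Lemma vnorm_sq x : vnorm x ^+ 2 = ssq x.
Proof. by rewrite /vnorm sqr_sqrtr // ssq_ge0. Qed.

Lemma vnormZ a x : vnorm (a *: x) = `|a| * vnorm x.
Proof.
rewrite /vnorm (eq_bigr (fun k => a ^+ 2 * (x k ord0) ^+ 2)); last first.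
  by move=> k _; rewrite mxE exprMn.
by rewrite -mulr_sumr sqrtrM ?sqr_ge0 // sqrtr_sqr.
Qed.

Lemma vnormN x : vnorm (- x) = vnorm x.
Proof. by rewrite -scaleN1r vnormZ normrN normr1 mul1r. Qed.

Lemma coord_le x k : `|x k ord0| <= vnorm x.
Proof.
rewrite -sqrtr_sqr /vnorm ler_wsqrtr // (bigD1 k) //= lerDl.
by apply: sumr_ge0 => i _; rewrite sqr_ge0.
Qed.

Lemma prodsum n (a b : 'I_n -> R) :
  (\sum_i a i) * (\sum_j b j) = \sum_i \sum_j a i * b j.
Proof. by rewrite mulr_suml; apply: eq_bigr => i _; rewrite mulr_sumr. Qed.

Lemma lagrange u v :
  \sum_(i < d.+1) \sum_(j < d.+1)
     (u i ord0 * v j ord0 - u j ord0 * v i ord0) ^+ 2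
  = 2 * (ssq u * ssq v - dot u v ^+ 2).
Proof.
have E1 := prodsum _ (fun i => u i ord0 ^+ 2) (fun j => v j ord0 ^+ 2).
have E2 := prodsum _ (fun i => v i ord0 ^+ 2) (fun j => u j ord0 ^+ 2).
have E3 := prodsum _ (fun i => u i ord0 * v i ord0) (fun j => u j ord0 * v j ord0).
rewrite /ssq /dot expr2 E3 mulrBr.
have -> : forall a : R, 2 * a = a + a by move=> a; ring.
rewrite {2}mulrC E1 E2.
rewrite mulr_sumr -sumrN -!big_split /=.
apply: eq_bigr => i _; rewrite mulr_sumr -sumrN -!big_split /=.
by apply: eq_bigr => j _; ring.
Qed.

Lemma cs u v : dot u v <= vnorm u * vnorm v.
Proof.
apply: (le_trans (ler_norm _)).
rewrite -sqrtr_sqr /vnorm -sqrtrM ?ssq_ge0 //; apply: ler_wsqrtr.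
rewrite -subr_ge0.
have : 0 <= 2 * (ssq u * ssq v - dot u v ^+ 2).
  rewrite -lagrange; apply: sumr_ge0 => i _; apply: sumr_ge0 => j _.
  exact: sqr_ge0.
by rewrite pmulr_rge0.
Qed.

Lemma ssqD u v : ssq (u + v) = ssq u + 2 * dot u v + ssq v.
Proof.
rewrite /ssq /dot mulr_sumr -!big_split /=; apply: eq_bigr => k _.
rewrite mxE; ring.
Qed.

Lemma vnormD u v : vnorm (u + v) <= vnorm u + vnorm v.
Proof.
have h0 := vnorm_ge0 u; have h1 := vnorm_ge0 v.
rewrite -[_ + _ in X in _ <= X]ger0_norm ?addr_ge0 // -sqrtr_sqr /vnorm.
apply: ler_wsqrtr; change (ssq (u + v) <= (vnorm u + vnorm v) ^+ 2); rewrite ssqD.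
have := cs u v; rewrite -/(ssq u) -/(ssq v) -!vnorm_sq; nra.
Qed.

Lemma vnormB u v : vnorm (u - v) = vnorm (v - u).
Proof. by rewrite -vnormN opprB. Qed.

Lemma vnorm_rev u v : `|vnorm u - vnorm v| <= vnorm (u - v).
Proof.
have h1 : vnorm u <= vnorm (u - v) + vnorm v.
  by rewrite -{1}(subrK v u) vnormD.
have h2 : vnorm v <= vnorm (u - v) + vnorm u.
  by rewrite vnormB -{1}(subrK u v) vnormD.
rewrite ler_norml; apply/andP; split; lra.
Qed.

Lemma vnorm_normalize y z : 0 < vnorm y -> 0 < vnorm z ->
  vnorm y * vnorm ((vnorm y)^-1 *: y - (vnorm z)^-1 *: z) <= 2 * vnorm (y - z).
Proof.
move=> ya zb; set a := vnorm y; set b := vnorm z.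
have -> : a^-1 *: y - b^-1 *: z = a^-1 *: (y - z) + (a^-1 - b^-1) *: z.
  by rewrite scalerBr scalerBl addrA subrK.
apply: (le_trans (ler_wpM2l (ltW ya) (vnormD _ _))).
rewrite !vnormZ -/b mulrDr mulrA ger0_norm ?invr_ge0 ?(ltW ya) //.
rewrite mulfV ?gt_eqF // mul1r.
have key : forall a b : R, 0 < a -> 0 < b -> a * (`|a^-1 - b^-1| * b) = `|b - a|.
  move=> a' b' ha hb; have -> : a'^-1 - b'^-1 = (b' - a') / (a' * b').
    by field; rewrite ?gt_eqF.
  rewrite normrM normfV (ger0_norm (mulr_ge0 (ltW ha) (ltW hb))).
  by field; rewrite ?gt_eqF.
rewrite key //.
have := vnorm_rev z y; rewrite -/a -/b vnormB; lra.
Qed.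

Definition KN (N : 'M[R]_d.+1) : R :=
  (d.+1)%:R * \sum_k \sum_l `|N k l|.

Lemma KN_ge0 N : 0 <= KN N.
Proof.
by apply: mulr_ge0 => //; apply: sumr_ge0 => k _; apply: sumr_ge0 => l _.
Qed.

Lemma vnorm_mul N y : vnorm (N *m y) <= KN N * vnorm y.
Proof.
set S := \sum_k \sum_l `|N k l|.
have hv := vnorm_ge0 y.
have hS : 0 <= S by apply: sumr_ge0 => k _; apply: sumr_ge0 => l _.
have hk : forall k, `|(N *m y) k ord0| <= S * vnorm y.
  move=> k; rewrite mxE.
  apply: (le_trans (ler_norm_sum _ _ _)).
  apply: (@le_trans _ _ (\sum_l `|N k l| * vnorm y)).
    apply: ler_sum => l _; rewrite normrM ler_wpM2l //; exact: coord_le.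
  rewrite -mulr_suml ler_wpM2r // /S [X in _ <= X](bigD1 k) //= lerDl.
  by apply: sumr_ge0 => i _; apply: sumr_ge0.
have h0 : 0 <= KN N * vnorm y by rewrite mulr_ge0 ?KN_ge0.
rewrite -[X in _ <= X]ger0_norm // -sqrtr_sqr /vnorm; apply: ler_wsqrtr.
apply: (@le_trans _ _ (\sum_(k < d.+1) (S * vnorm y) ^+ 2)).
  apply: ler_sum => k _; have := hk k; rewrite -real_normK ?num_real //.
  have := normr_ge0 ((N *m y) k ord0); nra.
have e : (KN N * vnorm y)^+2 = (d.+1)%:R^+2 * (S * vnorm y)^+2.
  by rewrite /KN -/S; ring.
rewrite e sumr_const card_ord -[_ *+ d.+1](mulr_natl _ d.+1).
have hd : 1 <= (d.+1)%:R :> R by rewrite ler1n.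
have := sqr_ge0 (S * vnorm y); move: ((S * vnorm y) ^+ 2) => t ht.
move: ((d.+1)%:R : R) hd => n hn.
have h : 0 <= (n - 1) * (n * t) by apply: mulr_ge0; [lra|apply: mulr_ge0; lra].
rewrite -subr_ge0; apply: (le_trans h); rewrite le_eqVlt; apply/orP; left.
apply/eqP; ring.
Qed.

Lemma phiA_scale (M : 'M[R]_d.+1) t y : 0 < t -> phiA M (t *: y) = phiA M y.
Proof.
move=> t0; rewrite /phiA -scalemxAr vnormZ ger0_norm ?(ltW t0) //.
by rewrite scalerA invfM mulrAC mulVf ?gt_eqF // mul1r.
Qed.

Lemma opnorm_ge (M : 'M[R]_d.+1) x : sphere x -> vnorm (M *m x) <= opnorm M.
Proof.
move=> sx; rewrite /opnorm; apply: ub_le_sup; last by exists x.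
exists (KN M) => _ [x' sx' <-].
by have := vnorm_mul M x'; rewrite sx' mulr1.
Qed.

Variable L : finType.
Variable A : L -> 'M[R]_d.+1.
Hypothesis Aunit : forall i, A i \in unitmx.

Definition KK : R := 1 + \sum_a KN (invmx (A a)).

Lemma KK_ge1 : 1 <= KK.
Proof. by rewrite /KK lerDl; apply: sumr_ge0 => a _; apply: KN_ge0. Qed.

Lemma lowA a y : vnorm y <= KK * vnorm (A a *m y).
Proof.
rewrite -{1}(mulKmx (Aunit a) y).
apply: (le_trans (vnorm_mul _ _)); apply: ler_wpM2r; first exact: vnorm_ge0.
rewrite /KK (bigD1 a) //=.
have : 0 <= \sum_(b | b != a) KN (invmx (A b)) by apply: sumr_ge0 => b _; apply: KN_ge0.
lra.
Qed.

Lemma Aword_cons a w : Aword A (a :: w) = A a * Aword A w.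
Proof. by rewrite /Aword big_cons. Qed.

Lemma Aword_cat (s w : seq L) : Aword A (s ++ w) = Aword A s * Aword A w.
Proof. by rewrite /Aword big_cat. Qed.

Lemma Aword_nil : Aword A [::] = 1.
Proof. by rewrite /Aword big_nil. Qed.

Lemma lowW w y : vnorm y <= KK ^+ size w * vnorm (Aword A w *m y).
Proof.
elim: w y => [|a w IH] y.
  by rewrite Aword_nil expr0 mul1r mul1mx.
rewrite Aword_cons -mulmxE -mulmxA /= exprS -mulrA.
apply: (le_trans (IH y)).
have h := lowA a (Aword A w *m y).
have hK : 0 <= KK ^+ size w by apply: exprn_ge0; have := KK_ge1; lra.
apply: (le_trans (ler_wpM2l hK h)).
by rewrite !mulrA [KK ^+ _ * KK]mulrC.
Qed.

Lemma vnorm_pos w x : sphere x -> 0 < vnorm (Aword A w *m x).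
Proof.
move=> sx; have := lowW w x; rewrite sx.
have hK : 0 < KK ^+ size w by apply: exprn_gt0; have := KK_ge1; lra.
have := vnorm_ge0 (Aword A w *m x); rewrite le_eqVlt => /orP[/eqP <-|//].
by rewrite mulr0 ler10.
Qed.

Lemma phiword_eq w x : sphere x -> phiword A w x = phiA (Aword A w) x.
Proof.
move=> sx; elim: w => [|a w IH].
  by rewrite /= /phiA Aword_nil mul1mx sx invr1 scale1r.
rewrite /= IH.
rewrite [X in phiA (A a) X]/phiA phiA_scale ?invr_gt0 ?vnorm_pos //.
by rewrite Aword_cons /phiA -mulmxE mulmxA.
Qed.
End V.
Arguments vnorm_ge0 {R d}.
Arguments vnorm_normalize {R d}.
Arguments opnorm_ge {R d}.
Arguments KK {R d L}.
Arguments KK_ge1 {R d L}.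
Arguments lowW {R d L A}.
Arguments vnorm_pos {R d L A}.
Arguments phiword_eq {R d L A}.

Lemma split_words (L : finType) (i j : seq L) : size i = size j -> i <> j ->
  exists u a b i' j', [/\ i = u ++ a :: i', j = u ++ b :: j', a <> b &
     size i' = size j'].
Proof.
elim: i j => [|a i IH] [|b j] //=.
move=> [sij] neq.
have [ab|ab] := eqVneq a b.
  subst b; have [|u [a' [b' [i' [j' [e1 e2 ne se]]]]]] := IH j sij.
    by move=> e; apply: neq; rewrite e.
  by exists (a :: u), a', b', i', j'; rewrite e1 e2.
by exists [::], a, b, i, j; split => //; apply/eqP.
Qed.

Theorem proposition2p2 (R : realType) (d : nat) (L : finType)
  (A : L -> 'M[R]_d.+1) (J : set 'cV[R]_d.+1) :
  (forall i, A i \in unitmx) ->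
  J `<=` @sphere R d -> J !=set0 ->
  strong_exp_sep A J -> strongly_diophantine A.
Proof.
move=> Aunit Jsph J0 [inj [c0 [c0pos sep]]].
have K1 := KK_ge1 A.
set K := KK A in K1.
set c1 := Num.min c0 1.
have c1pos : 0 < c1 by rewrite lt_min c0pos ltr01.
have c1le1 : c1 <= 1 by rewrite ge_min lexx orbT.
have c1le0 : c1 <= c0 by rewrite ge_min lexx.
exists (c1 / (2 * K)); split.
  by apply: divr_gt0 => //; apply: mulr_gt0 => //; lra.
move=> n i j si sj neq.
have [s [a [b [i' [j' [ei ej ab sij]]]]]] := @split_words _ i j (etrans si (esym sj)) neq.
set P := a :: i'; set Q := b :: j'.
set m := size P.
have sQ : size Q = m by rewrite /m /= sij.
have nsame : ~ same_on_sphere (phiword A P) (phiword A Q).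
  by move/inj => [].
have := sep m P Q erefl sQ ab nsame.
case/(sup_gt _) => [|r [x Jx <-] hr].
  by case: J0 => x0 Jx0; exists (vnorm (phiword A P x0 - phiword A Q x0)); exists x0.
have sx := Jsph x Jx.
rewrite !(phiword_eq Aunit _ _ sx) in hr.
set y := Aword A P *m x in hr; set z := Aword A Q *m x in hr.
have hy := lowW Aunit P x; rewrite sx -/y -/K -/m in hy.
have ypos : 0 < vnorm y by apply: vnorm_pos.
have zpos : 0 < vnorm z by apply: vnorm_pos.
have hn := vnorm_normalize _ _ ypos zpos.
have hD := lowW Aunit s (y - z); rewrite -/K in hD.
have eD : Aword A s *m (y - z) = (Aword A i - Aword A j) *m x.
  by rewrite ei ej !Aword_cat -mulrBr -mulmxE -mulmxA mulmxBl.
rewrite eD in hD.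
have hop := opnorm_ge (Aword A i - Aword A j) _ sx.
have nE : n = (size s + m)%N by rewrite -si ei size_cat.
rewrite nE.
set k := size s in hD nE *.
have Km0 : 0 < K ^+ m by apply: exprn_gt0; lra.
have Kk0 : 0 < K ^+ k by apply: exprn_gt0; lra.
have p1 : c1 ^+ (k + m) <= c1 ^+ m.
  by apply: ler_wiXn2l => //; [lra | rewrite leq_addl].
have p2 : c1 ^+ m <= c0 ^+ m.
  by apply: lerXn2r => //; rewrite qualifE /=; lra.
have p3 : c0 ^+ m * vnorm y < 2 * vnorm (y - z).
  apply: (lt_le_trans _ hn); rewrite mulrC ltr_pM2l //.
have h2 : 2 <= 2 ^+ (k + m) :> R.
  have : (0 < k + m)%N by rewrite addn_gt0 /m /= orbT.
  case: (k + m)%N => // n' _; rewrite exprS.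
  have : 1 <= 2 ^+ n' :> R by apply: exprn_ege1; lra.
  lra.
have e2K : (2 * K) ^+ (k + m) = 2 ^+ (k + m) * (K ^+ k * K ^+ m).
  by rewrite exprMn -exprD.
rewrite expr_div_n e2K ltr_pdivrMr; last first.
  apply: mulr_gt0; [apply: exprn_gt0; lra | exact: mulr_gt0].
have hy' : 0 <= vnorm y := ltW ypos.
have hyz := vnorm_ge0 (y - z).
have hDD := vnorm_ge0 ((Aword A i - Aword A j) *m x).
set O := opnorm _ in hop *.
set V := vnorm ((Aword A i - Aword A j) *m x) in hD hop hDD.
set Y := vnorm y in hy hy' p3 hn ypos.
set Z := vnorm (y - z) in hD p3 hyz hn.
set a1 := c1 ^+ (k + m) in p1 *.
set a2 := c1 ^+ m in p1 p2.
set a3 := c0 ^+ m in p2 p3.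
set km := K ^+ m in Km0 hy *.
set kk := K ^+ k in Kk0 hD *.
set t2 := 2 ^+ (k + m) in h2 *.
have a1pos : 0 < a1 by rewrite /a1 exprn_gt0.
(* a1 <= a3 <= a3 * km * Y < 2 km Z <= 2 km kk V <= t2 kk km O *)
have s1 : a1 <= a3 * (km * Y) by have := ler_wpM2l (le_trans (ltW a1pos) (le_trans p1 p2)) hy; rewrite mulr1; lra.
have s2 : a3 * (km * Y) < 2 * km * Z.
  have h := p3; rewrite -(ltr_pM2l Km0) in h; lra.
have s3 : 2 * km * Z <= 2 * km * (kk * V) by apply: ler_wpM2l => //; apply: mulr_ge0; lra.
have s4 : 2 * km * (kk * V) <= t2 * (kk * km) * O.
  have hV : V <= O := hop.
  have e : t2 * (kk * km) * O = t2 * km * (kk * O) by ring.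
  rewrite e; apply: ler_pM => //; first by apply: mulr_ge0; lra.
  - by apply: mulr_ge0; lra.
  - by apply: ler_wpM2r; lra.
  - by apply: ler_wpM2l; lra.
rewrite mulrC; lra.
Qed.
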